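(* Let $V=(\mathbb F_2)^n$ with $n=bs$, decomposed into bricks $V=V_1\oplus\cdots\oplus V_b$, $\dim V_j=s$. Let $r\ge2$ and $\rho_1,\dots,\rho_r\in\mathrm{Sym}(V)$, and let $\Phi$ be the $r$-round Feistel network whose $i$-th round applies the Feistel operator $\bar\rho_i$. Assume that for every $1\le i\le r$, $0\rho_i=0$ and $\rho_i=\gamma_i\lambda_i$, where \begin{enumerate} \item[a)] $\gamma_i$ is a parallel map whose S-boxes are weakly $2^\delta$-uniform and strongly $\delta$-anti-invariant, for some $\delta<s$; \item[b)] $\lambda_i$ is a linear strongly proper diffusion layer. \end{enumerate} Suppose there exists a sequence of $r+1$ non-trivial linear partitions $\mathcal L(\mathcal U_1),\dots,\mathcal L(\mathcal U_{r+1})$ of $V\times V$, where each $\mathcal U_i$ is a proper non-trivial subgroup of $V\times V$ and $\mathcal L(\mathcal U_i)\bar\rho_i=\mathcal L(\mathcal U_{i+1})$ for all $1\le i\le r$. For each $i$ let $A_i=\{a\in V\mid (a,c)\in\mathcal U_i\text{ for some }c\in V\}$ and $D_i=\{d\in V\mid (0,d)\in\mathcal U_i\}$. Then none of the following conditions holds: \begin{enumerate} \item there exists $1\le i\le r-1$ such that $\mathcal L(\mathcal U_{i+1})\bar\rho_{i+1}=\mathcal L(\mathcal U_i)$; \item there exists $1\le i\le r-1$ such that $\mathcal U_i=A_i\times D_i$, $\mathcal U_{i+1}=A_{i+1}\times D_{i+1}$ and $\mathcal U_{i+2}=A_{i+2}\times D_{i+2}$; \item there exists $1\le i\le r$ such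 that $D_i=\{0\}$ and $D_{i+1}=\{0\}$; \item there exists $1\le i\le r$ such that $A_i=\{0\}$ and $A_{i+1}=\{0\}$. \end{enumerate}
   Context: Maps act on the right and are composed left to right ($\gamma\lambda$ means first $\gamma$, then $\lambda$); $+$ is bitwise XOR. The Feistel operator induced by $\rho\in\mathrm{Sym}(V)$ is $\bar\rho:V\times V\to V\times V$, $(x_1,x_2)\bar\rho=(x_2,\ x_1+x_2\rho)$. A wall is a subspace $\bigoplus_{j\in I}V_j$ with $\emptyset\ne I\subsetneq\{1,\dots,b\}$. A parallel map is $\gamma\in\mathrm{Sym}(V)$ acting brickwise, $\gamma=(\gamma^{(1)},\dots,\gamma^{(b)})$ with $\gamma^{(j)}\in\mathrm{Sym}(V_j)$ (its S-boxes, viewed as permutations of $(\mathbb F_2)^s$). A linear $\lambda\in\mathrm{GL}(V)$ is a strongly proper diffusion layer if there are no walls $W,W'$ with $W\lambda=W'$. A map $f\in\mathrm{Sym}((\mathbb F_2)^s)$ is weakly $d$-uniform if for each $a\ne0$, $|\{xf+(x+a)f\mid x\in(\mathbb F_2)^s\}|>2^{s-1}/d$. For $1\le\epsilon<s$, $f$ with $0f=0$ is strongly $\epsilon$-anti-invariant if for all proper non-trivial subspaces $U,W$ of $(\mathbb F_2)^s$, $Uf=W$ implies $\dim U=\dim W<s-\epsilon$. For a subgroup $\mathcal U$ of $V\times V$, $\mathcal L(\mathcal U)=\{\mathcal U+v\mid v\in V\times V\}$ (non-trivial if neither the partition into singletons nor $\{V\times V\}$), and $\mathcal A f=\{Af\mid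 A\in\mathcal A\}$ for a partition $\mathcal A$. *)

(* Defs.v *)
From HB Require Import structures.
From mathcomp Require Import all_boot all_order all_fingroup all_algebra.
Set Implicit Arguments. Unset Strict Implicit. Unset Printing Implicit Defensive.
Import GRing.Theory.
Local Open Scope ring_scope.

(* A brick V_j = (F_2)^s, and the state space V = V_1 (+) ... (+) V_b,
   represented as functions from the brick index set 'I_b to bricks. *)
Notation brick s := 'rV['F_2]_s.
Notation state b s := {ffun 'I_b -> brick s}.

(* Maps act on the right; for permutations, (g * l)%g x = l (g x) (permM),
   i.e. gamma*lambda means "first gamma, then lambda". *)

Definition feistel b s (rho : {perm state b s}) (x : state b s * state b s)
  : state b s * state b s := (x.2, x.1 + rho x.2).

Definition parallel_with b s (g : {perm state b s}) (P : {perm brick s} -> Prop) :=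
  exists S : 'I_b -> {perm brick s},
    (forall j, P (S j)) /\ (forall (x : state b s) (j : 'I_b), g x j = S j (x j)).

Definition weakly_uniform s (d : nat) (f : {perm brick s}) :=
  forall a : brick s, a != 0 ->
    ((2 ^ (s - 1))%:R / d%:R < #|[set f x + f (x + a) | x : brick s]|%:R :> rat).

(* strongly e-anti-invariant (the side condition 1 <= e < s is imposed where used) *)
Definition strongly_anti_invariant s (e : nat) (f : {perm brick s}) :=
  f 0 = 0 /\
  forall U W : {vspace brick s},
    U != 0%VS -> U != fullv -> W != 0%VS -> W != fullv ->
    f @: [set x | x \in U] = [set x | x \in W] ->
    \dim U = \dim W /\ (\dim W < s - e)%N.

Definition wall b s (I : {set 'I_b}) : {set state b s} :=
  [set x : state b s | [forall j, (j \notin I) ==> (x j == 0)]].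

Definition is_wall_index b (I : {set 'I_b}) := I != set0 /\ I != setT.

Definition strongly_proper b s (l : {perm state b s}) :=
  ~ exists I I' : {set 'I_b}, is_wall_index I /\ is_wall_index I' /\
      l @: wall s I = wall s I'.

Definition is_linear b s (l : {perm state b s}) :=
  forall (a : 'F_2) (x y : state b s), l (a *: x + y) = a *: l x + l y.

Definition is_subgroup b s (U : {set state b s * state b s}) :=
  0 \in U /\ {in U &, forall x y, x - y \in U}.

Definition lin_part b s (U : {set state b s * state b s})
  : {set {set state b s * state b s}} :=
  [set (fun u : state b s * state b s => u + v) @: U | v : state b s * state b s].

Definition part_image b s (rho : {perm state b s})
  (P : {set {set state b s * state b s}}) : {set {set state b s * state b s}} :=
  (fun X : {set state b s * state b s} => feistel rho @: X) @: P.

Definition Aset b s (U : {set state b s * state b s}) : {set state b s} :=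
  [set a | [exists c, (a, c) \in U]].

Definition Dset b s (U : {set state b s * state b s}) : {set state b s} :=
  [set d | (0, d) \in U].

(* Main.v *)
Require Import Defs.
From HB Require Import structures.
From mathcomp Require Import all_boot all_order all_fingroup all_algebra all_field.
From mathcomp Require Import zify.
Set Implicit Arguments. Unset Strict Implicit.
Import GRing.Theory Num.Theory.
Local Open Scope ring_scope.

Lemma addxx {V : lmodType 'F_2} (x : V) : x + x = 0.
Proof. by rewrite -{1 2}[x]scale1r -scalerDl (_ : 1 + 1 = 0) ?scale0r //; apply/eqP. Qed.

Lemma oppxx {V : lmodType 'F_2} (x : V) : - x = x.
Proof. by rewrite -[- x]add0r -(addxx x) addrK. Qed.

Lemma addKx {V : lmodType 'F_2} (x y : V) : x + y + y = x.
Proof. by rewrite -addrA addxx addr0. Qed.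

Lemma subg_add b s (X : {set state b s * state b s}) x y :
  is_subgroup X -> x \in X -> y \in X -> x + y \in X.
Proof. by case=> _ H xX yX; rewrite -[y]oppxx; apply: H. Qed.

Lemma feistel_inj b s (rho : {perm state b s}) : injective (feistel rho).
Proof.
case=> [x1 x2] [y1 y2]; rewrite /feistel /= => [[e1 e2]].
by move: e2; rewrite e1 => /addIr ->.
Qed.

Lemma feistel0 b s (rho : {perm state b s}) : rho 0 = 0 -> feistel rho 0 = 0.
Proof. by move=> h; rewrite /feistel /= h addr0. Qed.

Lemma R2 b s (rho : {perm state b s}) (X Y : {set state b s * state b s}) :
  part_image rho (lin_part X) = lin_part Y -> is_subgroup X -> is_subgroup Y ->
  forall u v, u \in X -> feistel rho (u + v) + feistel rho v \in Y.
Proof.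
move=> H [X0 _] HY u v uX.
have: feistel rho @: ((fun w : state b s * state b s => w + v) @: X) \in part_image rho (lin_part X).
  by apply: imset_f; apply/imsetP; exists v.
rewrite H => /imsetP [w _ Hw].
have h1: feistel rho (u + v) \in feistel rho @: ((fun w : state b s * state b s => w + v) @: X).
  by apply: imset_f; apply: imset_f.
have h2: feistel rho (0 + v) \in feistel rho @: ((fun w : state b s * state b s => w + v) @: X).
  by apply: imset_f; apply: imset_f.
rewrite add0r in h2.
move: h1 h2; rewrite Hw => /imsetP [y1 y1Y ->] /imsetP [y2 y2Y ->].
by rewrite addrACA addxx addr0; apply: subg_add.
Qed.

Lemma R1 b s (rho : {perm state b s}) (X Y : {set state b s * state b s}) :
  rho 0 = 0 ->
  part_image rho (lin_part X) = lin_part Y -> is_subgroup X -> is_subgroup Y ->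
  forall u, u \in X -> feistel rho u \in Y.
Proof.
move=> r0 H HX HY u uX.
by have := R2 H HX HY 0 uX; rewrite addr0 feistel0 // addr0.
Qed.

Lemma R1' b s (rho : {perm state b s}) (X Y : {set state b s * state b s}) :
  rho 0 = 0 ->
  part_image rho (lin_part X) = lin_part Y -> is_subgroup X -> is_subgroup Y ->
  forall y, y \in Y -> exists2 x, x \in X & feistel rho x = y.
Proof.
move=> r0 H HX HY y yY.
have: ((fun w : state b s * state b s => w + 0) @: Y) \in part_image rho (lin_part X).
  by rewrite H; apply/imsetP; exists 0.
case/imsetP=> Z /imsetP [v _ ->] HZ.
have h0: (0 + 0 : state b s * state b s) \in ((fun w : state b s * state b s => w + 0) @: Y).
  by apply: imset_f; case: HY.
have hy: y + 0 \in ((fun w : state b s * state b s => w + 0) @: Y) by apply: imset_f.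
move: h0 hy; rewrite HZ => /imsetP [z /imsetP [x0 x0X ->] e0] /imsetP [z' /imsetP [x xX ->] ey].
have e : x0 + v = 0 by apply: (@feistel_inj _ _ rho); rewrite feistel0 // -e0 addr0.
have ev : v = x0 by rewrite -[v]add0r -(addxx x0) -addrA e addr0.
by exists (x + x0); [apply: subg_add | rewrite -ev -[y]addr0 ey].
Qed.

Definition Eset b s (U : {set state b s * state b s}) : {set state b s} :=
  [set a | (a, 0) \in U].

Lemma factA b s (rho : {perm state b s}) (X Y : {set state b s * state b s}) :
  rho 0 = 0 ->
  part_image rho (lin_part X) = lin_part Y -> is_subgroup X -> is_subgroup Y ->
  Dset Y = Eset X.
Proof.
move=> r0 H HX HY; apply/setP => d; rewrite !inE; apply/idP/idP.
  case/(R1' r0 H HX HY) => [[x1 x2] xX]; rewrite /feistel /= => [[e2 e1]].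
  by move: xX; rewrite e2 r0 addr0 in e1; rewrite e1 e2.
move=> dX; have := R1 r0 H HX HY dX.
by rewrite /feistel /= r0 addr0.
Qed.

Lemma factB b s (rho : {perm state b s}) (X Y : {set state b s * state b s}) :
  rho 0 = 0 ->
  part_image rho (lin_part X) = lin_part Y -> is_subgroup X -> is_subgroup Y ->
  Eset Y = Dset X -> forall d, d \in Dset X -> rho d \in Eset X.
Proof.
move=> r0 H HX HY E d dX.
have dY : (d, 0) \in Y by move: dX; rewrite -E inE.
case: (R1' r0 H HX HY dY) => [[x1 x2] xX]; rewrite /feistel /= => [[e2 e1]].
have hx1 : x1 = rho d by rewrite -e2 -[x1](addKx _ (rho x2)) e1 add0r.
have: (x1, x2) + (0, d) \in X by apply: subg_add => //; rewrite inE in dX.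
have -> : (x1, x2) + (0, d) = (x1 + 0, x2 + d) by [].
by rewrite inE -hx1 -e2 addxx addr0.
Qed.

Lemma pairD b s (a c a' c' : state b s) : (a, c) + (a', c') = (a + a', c + c').
Proof. by []. Qed.

Lemma factC b s (rho : {perm state b s}) (X Y : {set state b s * state b s}) :
  rho 0 = 0 ->
  part_image rho (lin_part X) = lin_part Y -> is_subgroup X -> is_subgroup Y ->
  forall c d x, (c, d) \in X -> rho (d + x) + rho x + rho d \in Dset Y.
Proof.
move=> r0 H HX HY c d x dX; rewrite inE.
have h1 := R2 H HX HY (0, x) dX.
have h2 := R1 r0 H HX HY dX.
have := subg_add HY h1 h2.
rewrite /feistel /= !pairD !add0r addKx addxx.
by rewrite addr0 -(addrA c) addrACA addxx add0r.
Qed.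

Definition RH b s delta (rho gamma lambda : {perm state b s}) : Prop :=
  [/\ rho 0 = 0, rho = (gamma * lambda)%g,
      parallel_with gamma
        (fun f => weakly_uniform (2 ^ delta) f /\ strongly_anti_invariant delta f),
      is_linear lambda & strongly_proper lambda].

Lemma lin_add b s (l : {perm state b s}) : is_linear l -> forall x y, l (x + y) = l x + l y.
Proof. by move=> h x y; have := h 1 x y; rewrite !scale1r. Qed.

Lemma lin0 b s (l : {perm state b s}) : is_linear l -> l 0 = 0.
Proof. by move=> h; have e := lin_add h 0 0; rewrite addr0 in e; rewrite e addxx. Qed.

Lemma rho_comp b s (rho g l : {perm state b s}) : rho = (g * l)%g -> forall x, rho x = l (g x).
Proof. by move=> -> x; rewrite permM. Qed.

Definition ej b s (j : 'I_b) (v : brick s) : state b s :=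
  [ffun k => if k == j then v else 0].

Lemma ratpow (s d : nat) : (d < s)%N ->
  ((2 ^ (s - 1))%:R / (2 ^ d)%:R : rat) = (2 ^ (s - 1 - d))%:R.
Proof.
move=> h; rewrite -{1}(@subnK d (s - 1)); last by case: s h => //= s; rewrite subn1.
by rewrite expnD natrM mulfK // pnatr_eq0 expn_eq0.
Qed.

Lemma wu_nonconst s delta (f : {perm brick s}) (a : brick s) :
  (0 < delta < s)%N -> weakly_uniform (2 ^ delta) f -> a != 0 ->
  exists y, f y + f (y + a) != f 0 + f a.
Proof.
move=> /andP [_ hd] hw a0; apply/existsP; apply: contraT; move/existsPn => h.
have := hw a a0; rewrite ratpow //.
have -> : [set f x + f (x + a) | x : brick s] = [set f 0 + f a].
  apply/setP => z; rewrite inE; apply/imsetP/eqP => [[x _ ->] | ->].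
    by apply/eqP; rewrite -(negbK (_ == _)) h.
  by exists 0; rewrite ?add0r.
by rewrite cards1 ltr_nat ltnS leqn0 expn_eq0.
Qed.

Lemma ejE b s (j k : 'I_b) (v : brick s) : ej j v k = if k == j then v else 0.
Proof. by rewrite ffunE. Qed.

Lemma nonzero_elt b s (X : {set state b s * state b s}) :
  0 \in X -> X != [set (0 : state b s * state b s)] -> exists2 u, u \in X & u != 0.
Proof.
move=> X0 hX; case: (pickP [pred u | (u \in X) && (u != 0)]) => [u /andP [] | none].
  by exists u.
case/eqP: hX; apply/setP => u; rewrite inE; apply/idP/eqP => [uX | ->] //.
by have := none u; rewrite /= uX /= => /negbFE/eqP.
Qed.

Lemma lemL b s delta (rho g l : {perm state b s}) (X Y : {set state b s * state b s}) :
  (0 < delta < s)%N -> RH delta rho g l ->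
  part_image rho (lin_part X) = lin_part Y -> is_subgroup X -> is_subgroup Y ->
  X != [set (0 : state b s * state b s)] -> Dset Y != [set (0 : state b s)].
Proof.
move=> hd [r0 hrho [S [hS hg]] hlin _] H HX HY hX.
case: (nonzero_elt (proj1 HX) hX) => [[c a] uX u0].
have neq : forall z, z \in Dset Y -> z != 0 -> Dset Y != [set (0 : state b s)].
  by move=> z zY z0; apply/negP => /eqP E; move: zY; rewrite E inE (negPf z0).
case: (eqVneq a 0) => [a0 | a0].
  apply: (neq c); last by apply: contraNneq u0 => c0; rewrite c0 a0.
  by have := R1 r0 H HX HY uX; rewrite inE /feistel /= a0 r0 addr0.
have [j aj] : exists j, a j != 0.
  apply/existsP; apply: contraR a0 => /existsPn h; apply/eqP/ffunP => j.
  by rewrite ffunE; apply/eqP/negPn/h.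
have [S0 _] := (proj2 (hS j)).
have [y hy] := wu_nonconst hd (proj1 (hS j)) aj.
apply: (neq _ (factC r0 H HX HY (ej j y) uX)).
rewrite !(rho_comp hrho) -!(lin_add hlin).
apply: contraNneq hy => e.
have e' : g (a + ej j y) + g (ej j y) + g a = 0.
  by apply: (@perm_inj _ l); rewrite e lin0.
move/ffunP/(_ j): e'; rewrite !ffunE !hg !ffunE eqxx.
rewrite S0 add0r (addrC y) => e2; apply/eqP.
by rewrite -[S j (a j)]add0r -e2 addKx; apply: addrC.
Qed.

Lemma vs_of_set s (P : {set brick s}) :
  0 \in P -> {in P &, forall x y, x + y \in P} ->
  exists U : {vspace brick s}, forall x, (x \in U) = (x \in P).
Proof.
move=> P0 PD; exists <<in_tuple (enum P)>>%VS => x; apply/idP/idP.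
  move/coord_span => ->; apply: (big_ind (fun z => z \in P)) => // i _.
  have hi : (in_tuple (enum P))`_i \in P by rewrite -mem_enum; apply: mem_nth.
  rewrite -[coord _ i x]natr_Zp scaler_nat.
  move: (nat_of_ord (coord (in_tuple (enum P)) i x)) => n; elim: n => [|n IH]; first by rewrite mulr0n.
  by rewrite mulrS; apply: PD.
by move=> xP; apply: memv_span; rewrite mem_enum.
Qed.

Lemma cds b s delta (g : {perm state b s}) (S : 'I_b -> {perm brick s}) (T T' : {set state b s}) :
  (0 < delta < s)%N ->
  (forall j, weakly_uniform (2 ^ delta) (S j) /\ strongly_anti_invariant delta (S j)) ->
  (forall x j, g x j = S j (x j)) ->
  0 \in T -> {in T &, forall x y, x + y \in T} ->
  0 \in T' -> {in T' &, forall x y, x + y \in T'} ->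
  g @: T = T' ->
  (forall t x, t \in T -> g (t + x) + g x \in T') ->
  T = wall s [set j | [exists t in T, t j != 0]].
Proof.
move=> hd hS hg T0 TD T'0 T'D gT hc.
have Sz : forall k, S k 0 = 0 by move=> k; exact: (proj1 (proj2 (hS k))).
have gej : forall j v, g (ej j v) = ej j (S j v).
  by move=> j v; apply/ffunP => k; rewrite hg !ffunE; case: eqP => [-> // | _]; apply: Sz.
have ejD : forall (j : 'I_b) (u v : brick s), ej j (u + v) = ej j u + ej j v.
  by move=> j u v; apply/ffunP => k; rewrite !ffunE; case: eqP => //; rewrite addr0.
have ej0 : forall j : 'I_b, ej j (0 : brick s) = 0 by move=> j; apply/ffunP => k; rewrite !ffunE; case: eqP.
have K : forall j t v, t \in T -> t j != 0 -> ej j v \in T.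
  move=> j t v tT tj.
  have [S0 AI] := proj2 (hS j).
  pose R := [set w | ej j w \in T]; pose Q := [set w | ej j w \in T'].
  have R0 : 0 \in R by rewrite inE ej0.
  have RD : {in R &, forall x y, x + y \in R}.
    by move=> x y; rewrite !inE ejD; apply: TD.
  have Q0 : 0 \in Q by rewrite inE ej0.
  have QD : {in Q &, forall x y, x + y \in Q}.
    by move=> x y; rewrite !inE ejD; apply: T'D.
  have hSRQ : S j @: R = Q.
    apply/setP => q; apply/imsetP/idP.
      by case=> w; rewrite !inE => wR ->; rewrite -gej -gT; apply: imset_f.
    rewrite inE -gT => /imsetP [t0 t0T e].
    exists ((S j)^-1 q)%g; last by rewrite permKV.
    rewrite inE; suff -> : ej j ((S j)^-1 q)%g = t0 by [].
    by apply: (@perm_inj _ g); rewrite gej permKV e.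
  have Qbig : (2 ^ (s - 1 - delta) < #|Q|)%N.
    have := proj1 (hS j) (t j) tj; rewrite ratpow ?ltr_nat; last by case/andP: hd.
    move/leq_trans; apply.
    rewrite -(card_imset _ (addIr (S j (t j)))); apply: subset_leq_card.
    apply/subsetP => z /imsetP [z' /imsetP [x _ ->] ->].
    rewrite inE.
    have h1 := hc t (ej j x) tT.
    have h2 : g t \in T' by rewrite -gT imset_f.
    have := T'D _ _ h1 h2; congr (_ \in T'); apply/ffunP => k; rewrite !ffunE !hg !ffunE.
    case: eqP => [->|_].
      by rewrite (addrC (t j)) [S j (x + t j) + _]addrC.
    by rewrite addr0 Sz addr0 addxx.
  have [q qQ q0] : exists2 q, q \in Q & q != 0.
    case: (pickP [pred q | (q \in Q) && (q != 0)]) => [q /andP [] | none].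
      by exists q.
    have : Q \subset [set 0].
      by apply/subsetP => z zQ; rewrite inE; have := none z; rewrite /= zQ /= => /negbFE.
    move/subset_leq_card; rewrite cards1 => h; move: Qbig.
    by rewrite ltnNge (leq_trans h) // expn_gt0.
  case: (vs_of_set R0 RD) => UR hUR; case: (vs_of_set Q0 QD) => UQ hUQ.
  have : v \in R; last by rewrite inE.
  apply: contraT => vR.
  have RnT : R != setT by apply: contraNneq vR => ->; rewrite inE.
  have cRQ : #|R| = #|Q| by rewrite -hSRQ card_imset //; apply: perm_inj.
  have URn0 : UR != 0%VS.
    have [w wR ew] : exists2 w, w \in R & S j w = q.
      by move: qQ; rewrite -hSRQ => /imsetP [w ? ->]; exists w.
    have wUR : w \in UR by rewrite hUR.
    apply: contraNneq q0 => e; move: wUR; rewrite e memv0 => /eqP w0.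
    by rewrite -ew w0 S0.
  have URnT : UR != fullv.
    by apply: contraNneq RnT => e; apply/eqP/setP => z; rewrite in_setT -hUR e memvf.
  have UQn0 : UQ != 0%VS.
    have qUQ : q \in UQ by rewrite hUQ.
    by apply: contraNneq q0 => e; move: qUQ; rewrite e memv0.
  have UQnT : UQ != fullv.
    apply: contraNneq RnT => e.
    have QT : Q = setT by apply/setP => z; rewrite in_setT -hUQ e memvf.
    by rewrite eqEcard subsetT /= cRQ QT !cardsT.
  have ER : [set x | x \in UR] = R by apply/setP => z; rewrite [in LHS]inE hUR.
  have EQ : [set x | x \in UQ] = Q by apply/setP => z; rewrite [in LHS]inE hUQ.
  have hAI : S j @: [set x | x \in UR] = [set x | x \in UQ] by rewrite ER EQ.
  have [_ hdim] := AI UR UQ URn0 URnT UQn0 UQnT hAI.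
  have cQ : #|Q| = (2 ^ \dim UQ)%N.
    by rewrite -EQ cardsE card_vspace card_Fp.
  move: Qbig; rewrite cQ ltn_exp2l // => h.
  move: (\dim UQ) hdim h => m; case/andP: hd => _ hds; clear; lia.
apply/setP => x; rewrite inE; apply/idP/forallP.
  move=> xT j; apply/implyP => jn; apply: contraR jn => xj.
  by rewrite inE; apply/existsP; exists x; rewrite xT xj.
move=> h.
have -> : x = \sum_j ej j (x j).
  apply/ffunP => k; rewrite sum_ffunE (bigD1 k) //= big1 ?addr0.
    by rewrite ffunE eqxx.
  by move=> j jk; rewrite ffunE eq_sym (negPf jk).
apply: (big_ind (fun z => z \in T)) => //= j _.
move: (h j); case: (boolP (j \in [set j | [exists t in T, t j != 0]])) => [jI _ | jn /implyP/(_ isT)/eqP ->]; last by rewrite ej0.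
by rewrite inE in jI; case/existsP: jI => t /andP [tT tj]; apply: (K j t).
Qed.

Lemma gwall b s (g : {perm state b s}) (S : 'I_b -> {perm brick s}) (I : {set 'I_b}) :
  (forall x j, g x j = S j (x j)) -> (forall j, S j 0 = 0) ->
  g @: wall s I = wall s I.
Proof.
move=> hg S0; apply/eqP; rewrite eqEcard card_imset ?leqnn ?andbT; last exact: perm_inj.
apply/subsetP => y /imsetP [x xw ->]; rewrite inE; apply/forallP => j; apply/implyP => jn.
by rewrite hg; move: xw; rewrite inE => /forallP/(_ j)/implyP/(_ jn)/eqP ->; rewrite S0.
Qed.

Lemma wall0 b s : wall s (set0 : {set 'I_b}) = [set (0 : state b s)].
Proof.
apply/setP => x; rewrite !inE; apply/forallP/eqP => [h | -> j].
  by apply/ffunP => j; rewrite ffunE; have := h j; rewrite inE => /eqP.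
by rewrite ffunE eqxx implybT.
Qed.

Lemma wallT b s : wall s (setT : {set 'I_b}) = setT.
Proof. by apply/setP => x; rewrite !inE; apply/forallP => j; rewrite inE. Qed.

Lemma cdsl b s delta (rho g l : {perm state b s}) (T T2 : {set state b s}) :
  (0 < delta < s)%N -> RH delta rho g l ->
  0 \in T -> {in T &, forall x y, x + y \in T} ->
  0 \in T2 -> {in T2 &, forall x y, x + y \in T2} ->
  rho @: T = T2 ->
  (forall t x, t \in T -> rho (t + x) + rho x \in T2) ->
  exists I, T = wall s I /\ l @: wall s I = T2.
Proof.
move=> hd [r0 hrho [S [hS hg]] hlin _] T0 TD T20 T2D rT hc.
pose T' := [set y | l y \in T2].
have T'0 : 0 \in T' by rewrite inE lin0.
have T'D : {in T' &, forall x y, x + y \in T'}.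
  by move=> x y; rewrite !inE lin_add //; apply: T2D.
have gT : g @: T = T'.
  apply/setP => y; rewrite inE; apply/imsetP/idP.
    by case=> t tT ->; rewrite -(rho_comp hrho) -rT; apply: imset_f.
  rewrite -rT => /imsetP [t tT e]; exists t => //.
  by apply: (@perm_inj _ l); rewrite e (rho_comp hrho).
have hc' : forall t x, t \in T -> g (t + x) + g x \in T'.
  by move=> t x tT; rewrite inE lin_add // -!(rho_comp hrho); apply: hc.
have hT := cds hd hS hg T0 TD T'0 T'D gT hc'.
exists [set j | [exists t in T, t j != 0]]; split => //.
have S0 : forall j, S j 0 = 0 by move=> j; exact: (proj1 (proj2 (hS j))).
rewrite -(gwall _ hg S0) -hT -imset_comp -rT.
by apply: eq_imset => x /=; rewrite (rho_comp hrho).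
Qed.

Lemma XT b s (X : {set state b s * state b s}) :
  is_subgroup X -> Dset X = setT -> Eset X = setT -> X = setT.
Proof.
move=> HX hD hE; apply/setP => [[a c]]; rewrite inE.
have ha : a \in Eset X by rewrite hE inE.
have hc : c \in Dset X by rewrite hD inE.
rewrite !inE in ha hc.
by have := subg_add HX ha hc; rewrite pairD addr0 add0r.
Qed.

Lemma permT b s (p : {perm state b s}) : p @: setT = setT.
Proof.
by apply/eqP; rewrite eqEcard subsetT card_imset ?leqnn //; apply: perm_inj.
Qed.

Lemma core b s delta (rho g l rho' g' l' : {perm state b s})
  (X Y : {set state b s * state b s}) :
  (0 < delta < s)%N -> RH delta rho g l -> RH delta rho' g' l' ->
  is_subgroup X -> is_subgroup Y ->
  X != [set (0 : state b s * state b s)] -> X != setT ->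
  part_image rho (lin_part X) = lin_part Y ->
  part_image rho' (lin_part Y) = lin_part X -> False.
Proof.
move=> hd hR hR' HX HY hX0 hXT H H'.
have [r0 hrho _ hlin hsp] := hR.
have [r0' _ _ _ _] := hR'.
have dYeX := factA r0 H HX HY.
have dXeY := factA r0' H' HY HX.
have hb1 := factB r0 H HX HY (esym dXeY).
have hb2 := factB r0' H' HY HX (esym dYeX).
have i1 : rho @: Dset X \subset Eset X.
  by apply/subsetP => z /imsetP [d dD ->]; apply: hb1.
have i2 : rho' @: Eset X \subset Dset X.
  by rewrite -dYeX dXeY; apply/subsetP => z /imsetP [d dD ->]; apply: hb2.
have c1 := subset_leq_card i1; rewrite card_imset in c1; last exact: perm_inj.
have c2 := subset_leq_card i2; rewrite card_imset in c2; last exact: perm_inj.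
have eDE : rho @: Dset X = Eset X.
  by apply/eqP; rewrite eqEcard i1 card_imset //; apply: perm_inj.
have eED : rho' @: Eset X = Dset X.
  by apply/eqP; rewrite eqEcard i2 card_imset //; apply: perm_inj.
have [X0 _] := HX.
have D0 : 0 \in Dset X by rewrite inE.
have E0 : 0 \in Eset X by rewrite inE.
have DD : {in Dset X &, forall x y, x + y \in Dset X}.
  move=> x y; rewrite !inE => hx hy.
  by have := subg_add HX hx hy; rewrite pairD addr0.
have ED : {in Eset X &, forall x y, x + y \in Eset X}.
  move=> x y; rewrite !inE => hx hy.
  by have := subg_add HX hx hy; rewrite pairD addr0.
have EX0 : Eset X != [set (0 : state b s)].
  by rewrite -dYeX; apply: (lemL hd hR H HX HY hX0).
have DX0 : Dset X != [set (0 : state b s)].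
  by apply: contraNneq EX0 => e; rewrite -eDE e imset_set1 r0.
have DXT : Dset X != setT.
  apply: contraNneq hXT => e; apply/eqP; apply: (XT HX e).
  by rewrite -eDE e permT.
have EXT : Eset X != setT.
  apply: contraNneq hXT => e; apply/eqP; apply: (XT HX _ e).
  by rewrite -eED e permT.
have cc1 : forall t x, t \in Dset X -> rho (t + x) + rho x \in Eset X.
  move=> t x tD.
  have h1 : rho (t + x) + rho x + rho t \in Eset X.
    by rewrite -dYeX; rewrite inE in tD; apply: (factC r0 H HX HY x tD).
  by have := ED _ _ h1 (hb1 _ tD); rewrite addKx.
have cc2 : forall t x, t \in Eset X -> rho' (t + x) + rho' x \in Dset X.
  move=> t x tE.
  have tD : t \in Dset Y by rewrite dYeX.
  have h1 : rho' (t + x) + rho' x + rho' t \in Dset X.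
    by rewrite inE in tD; apply: (factC r0' H' HY HX x tD).
  have h2 : rho' t \in Dset X by rewrite dXeY; apply: hb2.
  by have := DD _ _ h1 h2; rewrite addKx.
have [I [hI hlI]] := cdsl hd hR D0 DD E0 ED eDE cc1.
have [I' [hI' _]] := cdsl hd hR' E0 ED D0 DD eED cc2.
apply: hsp; exists I, I'; split; [|split].
- split.
    by apply: contraNneq DX0 => e; rewrite hI e wall0.
  by apply: contraNneq DXT => e; rewrite hI e wallT.
- split.
    by apply: contraNneq EX0 => e; rewrite hI' e wall0.
  by apply: contraNneq EXT => e; rewrite hI' e wallT.
by rewrite hlI hI'.
Qed.

Lemma prodstep b s (rho : {perm state b s}) (X Y : {set state b s * state b s}) :
  rho 0 = 0 ->
  part_image rho (lin_part X) = lin_part Y -> is_subgroup X -> is_subgroup Y ->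
  X = setX (Aset X) (Dset X) -> Aset Y = Dset X /\ Dset Y = Aset X.
Proof.
move=> r0 H HX HY hX; split.
  apply/setP => a; rewrite !inE; apply/existsP/idP.
    case=> c ac; case: (R1' r0 H HX HY ac) => [[x1 x2] xX].
    rewrite /feistel /= => [[e2 _]].
    by move: xX; rewrite {1}hX inE /= => /andP [_]; rewrite inE e2.
  move=> aD; have := R1 r0 H HX HY aD; rewrite /feistel /= => h.
  by exists (0 + rho a).
rewrite (factA r0 H HX HY); apply/setP => a; rewrite !inE.
apply/idP/existsP => [h | [c ac]]; first by exists 0.
have [X0 _] := HX.
rewrite hX inE /=; apply/andP; split.
  by rewrite inE; apply/existsP; exists c.
by rewrite inE.
Qed.

Unset Implicit Arguments.

Theorem theorem4p11 (b s r delta : nat)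
  (rho gamma lambda : nat -> {perm state b s})
  (U : nat -> {set state b s * state b s}) :
  (2 <= r)%N ->
  (0 < delta < s)%N ->
  (forall i, (1 <= i <= r)%N ->
     [/\ rho i 0 = 0,
         rho i = (gamma i * lambda i)%g,
         parallel_with (gamma i)
           (fun f => weakly_uniform (2 ^ delta) f /\ strongly_anti_invariant delta f),
         is_linear (lambda i)
       & strongly_proper (lambda i)]) ->
  (forall i, (1 <= i <= r.+1)%N ->
     [/\ is_subgroup (U i), U i != [set (0 : state b s * state b s)] & U i != setT]) ->
  (forall i, (1 <= i <= r)%N ->
     part_image (rho i) (lin_part (U i)) = lin_part (U i.+1)) ->
  ~ [\/ exists i, (1 <= i <= r.-1)%N /\
                  part_image (rho i.+1) (lin_part (U i.+1)) = lin_part (U i),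
        exists i, (1 <= i <= r.-1)%N /\
                  [/\ U i = setX (Aset (U i)) (Dset (U i)),
                      U i.+1 = setX (Aset (U i.+1)) (Dset (U i.+1))
                    & U i.+2 = setX (Aset (U i.+2)) (Dset (U i.+2))],
        exists i, (1 <= i <= r)%N /\ Dset (U i) = [set (0 : state b s)] /\ Dset (U i.+1) = [set (0 : state b s)]
      | exists i, (1 <= i <= r)%N /\ Aset (U i) = [set (0 : state b s)] /\ Aset (U i.+1) = [set (0 : state b s)]].
Proof.
move=> hr hd Hround HU Hpart.
have RHi : forall i, (1 <= i <= r)%N -> RH delta (rho i) (gamma i) (lambda i).
  by move=> i /Hround.
case=> [[i [hi Hc]] | [i [hi [e1 e2 e3]]] | [i [hi [d1 d2]]] | [i [hi [a1 a2]]]].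
- have hi1 : (1 <= i <= r)%N by move: hi hr; clear; lia.
  have hi2 : (1 <= i.+1 <= r)%N by move: hi hr; clear; lia.
  have hu1 : (1 <= i <= r.+1)%N by move: hi hr; clear; lia.
  have hu2 : (1 <= i.+1 <= r.+1)%N by move: hi hr; clear; lia.
  have [HX hX0 hXT] := HU i hu1.
  have [HY _ _] := HU i.+1 hu2.
  exact: (core hd (RHi i hi1) (RHi i.+1 hi2) HX HY hX0 hXT (Hpart i hi1) Hc).
- have hi1 : (1 <= i <= r)%N by move: hi hr; clear; lia.
  have hi2 : (1 <= i.+1 <= r)%N by move: hi hr; clear; lia.
  have hu1 : (1 <= i <= r.+1)%N by move: hi hr; clear; lia.
  have hu2 : (1 <= i.+1 <= r.+1)%N by move: hi hr; clear; lia.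
  have hu3 : (1 <= i.+2 <= r.+1)%N by move: hi hr; clear; lia.
  have [HX hX0 hXT] := HU i hu1.
  have [HY _ _] := HU i.+1 hu2.
  have [HZ _ _] := HU i.+2 hu3.
  have [r0 _ _ _ _] := RHi i hi1.
  have [r0' _ _ _ _] := RHi i.+1 hi2.
  have [p1 p2] := prodstep r0 (Hpart i hi1) HX HY e1.
  have [p3 p4] := prodstep r0' (Hpart i.+1 hi2) HY HZ e2.
  have eZ : U i.+2 = U i by rewrite e3 e1 p3 p2 p4 p1.
  have := Hpart i.+1 hi2; rewrite eZ => Hc.
  exact: (core hd (RHi i hi1) (RHi i.+1 hi2) HX HY hX0 hXT (Hpart i hi1) Hc).
- have hu1 : (1 <= i <= r.+1)%N by move: hi; clear; lia.
  have hu2 : (1 <= i.+1 <= r.+1)%N by move: hi; clear; lia.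
  have [HX hX0 _] := HU i hu1.
  have [HY _ _] := HU i.+1 hu2.
  have := lemL hd (RHi i hi) (Hpart i hi) HX HY hX0.
  by rewrite d2 eqxx.
- have hu1 : (1 <= i <= r.+1)%N by move: hi; clear; lia.
  have hu2 : (1 <= i.+1 <= r.+1)%N by move: hi; clear; lia.
  have [HX hX0 _] := HU i hu1.
  have [HY _ _] := HU i.+1 hu2.
  have [r0 _ _ _ _] := RHi i hi.
  move/eqP: hX0; apply; apply/setP => [[a c]]; rewrite inE; apply/idP/eqP => [uX | ->].
    have ha : a \in Aset (U i) by rewrite inE; apply/existsP; exists c.
    have := R1 r0 (Hpart i hi) HX HY uX; rewrite /feistel /= => hc.
    have hc' : c \in Aset (U i.+1) by rewrite inE; apply/existsP; exists (a + rho i c).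
    by move: ha hc'; rewrite a1 a2 !inE => /eqP -> /eqP ->.
  by case: HX.
Qed.
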